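(* Let $0<\beta'<\beta<1$. Then $\mathcal{R}_{\mathcal{X}}(\beta')$ satisfies the $\beta$-aggregation condition; in particular, for all $x\in\mathcal{X}$ and all $z'<F_x^{-1}(\beta)$, $$\mathbb{P}\big(Y\in\{y: z'\le f(x,y)\le F_x^{-1}(\beta)\}\cap\mathcal{R}_{\mathcal{X}}(\beta')\big)>0.$$
   Context: Let $(\Omega,\mathcal{F},\mathbb{P})$ be a probability space, $Y$ a random vector in $\mathbb{R}^d$, $\mathcal{X}\subseteq\mathbb{R}^k$ a set of decisions and $f:\mathcal{X}\times\mathbb{R}^d\to\mathbb{R}$ a loss function with $f(x,Y)$ measurable for all $x$. Write $F_x(z)=\mathbb{P}(f(x,Y)\le z)$ and $F_x^{-1}(\gamma)=\inf\{z: F_x(z)\ge\gamma\}$. For $0<\gamma<1$ the $\gamma$-risk region of $x$ is $\mathcal{R}_x(\gamma)=\{y\in\mathbb{R}^d: f(x,y)\ge F_x^{-1}(\gamma)\}$ and $\mathcal{R}_{\mathcal{X}}(\gamma)=\bigcup_{x\in\mathcal{X}}\mathcal{R}_x(\gamma)$. A set $\mathcal{R}$ with $\mathcal{R}_{\mathcal{X}}(\beta)\subseteq\mathcal{R}\subset\mathbb{R}^d$ satisfies the $\beta$-aggregation condition if for all $x\in\mathcal{X}$ and all $z'<F_x^{-1}(\beta)$, $\mathbb{P}\big(Y\in\{y: z'<f(x,y)\le F_x^{-1}(\beta)\}\cap\mathcal{R}\big)>0$. *)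

(* Defs.v *)
From HB Require Import structures.
From mathcomp Require Import all_boot all_order all_algebra.
From mathcomp Require Import all_classical all_reals all_analysis.
Set Implicit Arguments. Unset Strict Implicit. Unset Printing Implicit Defensive.
Import Order.TTheory GRing.Theory Num.Theory.
Local Open Scope classical_set_scope.
Local Open Scope ring_scope.

Definition cdf (R : realType) (d : measure_display) (T : measurableType d)
  (P : probability T R) (g : T -> R) (z : R) : \bar R :=
  P [set w | g w <= z].

Definition quantile (R : realType) (d : measure_display) (T : measurableType d)
  (P : probability T R) (g : T -> R) (gamma : R) : R :=
  inf [set z : R | (gamma%:E <= cdf P g z)%E].

Definition risk_region (R : realType) (d : measure_display) (T : measurableType d)
  (P : probability T R) (k n : nat) (Y : T -> 'rV[R]_n)
  (f : 'rV[R]_k -> 'rV[R]_n -> R) (x : 'rV[R]_k) (gamma : R) : set 'rV[R]_n :=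
  [set y | quantile P (fun w => f x (Y w)) gamma <= f x y].

Definition risk_region_set (R : realType) (d : measure_display) (T : measurableType d)
  (P : probability T R) (k n : nat) (Y : T -> 'rV[R]_n)
  (f : 'rV[R]_k -> 'rV[R]_n -> R) (X : set 'rV[R]_k) (gamma : R) : set 'rV[R]_n :=
  \bigcup_(x in X) risk_region P Y f x gamma.

(* "P(E) > 0" for an event E that need not be known to be measurable:
   E contains a measurable event of positive probability (positive inner
   probability; coincides with P(E) > 0 when E is measurable). *)
Definition pos_prob (R : realType) (d : measure_display) (T : measurableType d)
  (P : probability T R) (E : set T) : Prop :=
  exists A : set T, [/\ measurable A, A `<=` E & (0 < P A)%E].

Definition aggregation_condition (R : realType) (d : measure_display)
  (T : measurableType d) (P : probability T R) (k n : nat) (Y : T -> 'rV[R]_n)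
  (f : 'rV[R]_k -> 'rV[R]_n -> R) (X : set 'rV[R]_k) (beta : R)
  (Rset : set 'rV[R]_n) : Prop :=
  risk_region_set P Y f X beta `<=` Rset /\
  forall x, X x -> forall z' : R,
    z' < quantile P (fun w => f x (Y w)) beta ->
    pos_prob P (Y @^-1` ([set y | z' < f x y <= quantile P (fun w => f x (Y w)) beta]
                          `&` Rset)).

(* Main.v *)
Require Import Defs.
From HB Require Import structures.
From mathcomp Require Import all_boot all_order all_algebra.
From mathcomp Require Import all_classical all_reals all_analysis.
Import Order.TTheory GRing.Theory Num.Theory.
Local Open Scope classical_set_scope.
Local Open Scope ring_scope.
Section S.
Context (R : realType) (d : measure_display) (T : measurableType d)
  (P : probability T R) (g : T -> R) (mg : measurable_fun setT g).

Lemma mle a : measurable [set w | g w <= a].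
Proof.
have := mg measurableT _ (measurable_itv `]-oo, a]); rewrite setTI.
congr measurable; apply/seteqP; split=> w /=; rewrite in_itv /=.
Qed.
Lemma mlt a : measurable [set w | g w < a].
Proof.
have := mg measurableT _ (measurable_itv `]-oo, a[); rewrite setTI.
congr measurable; apply/seteqP; split=> w /=; rewrite in_itv /=.
Qed.
Lemma mgt a : measurable [set w | a < g w].
Proof.
have := mg measurableT _ (measurable_itv `]a, +oo[); rewrite setTI.
congr measurable; apply/seteqP; split=> w /=; rewrite in_itv /= ?andbT; by [].
Qed.
Lemma mge a : measurable [set w | a <= g w].
Proof.
have := mg measurableT _ (measurable_itv `[a, +oo[); rewrite setTI.
congr measurable; apply/seteqP; split=> w /=; rewrite in_itv /= ?andbT; by [].
Qed.

Lemma L1 c : c < 1 -> exists z, (c%:E < P [set w | (g w <= z)%R])%E.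
Proof.
move=> c1; apply/not_existsP => H.
pose F n := [set w | g w <= n%:R].
have cv : (P \o F) @ \oo --> P (\bigcup_n F n).
  apply: nondecreasing_cvg_mu => //; first by move=> i; exact: mle.
    by apply: bigcup_measurable => i _; exact: mle.
  move=> m n mn; apply/subsetPset => w /=; rewrite /F /= => /le_trans; apply.
  by rewrite ler_nat.
have E : \bigcup_n F n = setT.
  rewrite -subTset => t _ /=.
  by exists (Num.truncn (g t)).+1; rewrite //= /F /= ltW// truncnS_gt.
rewrite E probability_setT in cv.
have : (1 <= c%:E)%E.
  apply: (cvge_to_le cv); near=> n => /=.
  by rewrite leNgt; apply/negP => h; apply: (H n%:R).
by rewrite lee_fin leNgt c1.
Unshelve. all: by end_near. Qed.

Lemma L2 c : 0 < c -> exists z, (P [set w | (g w <= z)%R] < c%:E)%E.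
Proof.
move=> c0; apply/not_existsP => H.
pose F n := [set w | g w <= - n%:R].
have cv : (P \o F) @ \oo --> P (\bigcap_n F n).
  apply: nonincreasing_cvg_mu => //.
  - by rewrite (le_lt_trans (probability_le1 _ (mle _))) ?ltry.
  - by move=> i; exact: mle.
  - by apply: bigcapT_measurable => i; exact: mle.
  move=> m n mn; apply/subsetPset => w /=; rewrite /F /= => /le_trans; apply.
  by rewrite lerN2 ler_nat.
have E : \bigcap_n F n = set0.
  rewrite -subset0 => t /(_ (Num.bound (g t)) I).
  by rewrite /F/= leNgt => /negP; apply; rewrite ltrNl unstable.ltrNbound.
rewrite E measure0 in cv.
have : (c%:E <= 0)%E.
  apply: (cvge_to_ge cv); near=> n => /=.
  by rewrite leNgt; apply/negP => h; apply: (H (- n%:R)).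
by rewrite lee_fin leNgt c0.
Unshelve. all: by end_near. Qed.


Lemma arch (e : R) : 0 < e -> exists n : nat, n.+1%:R^-1 < e.
Proof.
move=> e0; exists (Num.truncn e^-1).
rewrite invf_plt ?posrE ?ltr0Sn //; exact: truncnS_gt.
Qed.

Lemma L3 a b : (forall e, 0 < e -> (b%:E <= P [set w | (g w <= a + e)%R])%E) ->
  (b%:E <= P [set w | (g w <= a)%R])%E.
Proof.
move=> H.
pose F n := [set w | g w <= a + n.+1%:R^-1].
have cv : (P \o F) @ \oo --> P (\bigcap_n F n).
  apply: nonincreasing_cvg_mu => //.
  - by rewrite (le_lt_trans (probability_le1 _ (mle _))) ?ltry.
  - by move=> i; exact: mle.
  - by apply: bigcapT_measurable => i; exact: mle.
  move=> m n mn; apply/subsetPset => w /=; rewrite /F /= => /le_trans; apply.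
  by rewrite lerD2l lef_pV2 ?posrE// ler_nat.
have E : \bigcap_n F n = [set w | g w <= a].
  apply/seteqP; split => w /=.
    move=> Hw; rewrite leNgt; apply/negP => lt.
    have : 0 < g w - a by rewrite subr_gt0.
    move/arch => [n Hn].
    have := Hw n I; rewrite /F /= -lerBlDl leNgt => /negP; apply; exact: Hn.
  move=> Hw n _; rewrite /F /=; apply: (le_trans Hw).
  by rewrite lerDl invr_ge0.
rewrite E in cv.
apply: (cvge_to_ge cv); near=> n => /=.
by apply: H; rewrite invr_gt0.
Unshelve. all: by end_near. Qed.

Lemma L4 a b : (forall e, 0 < e -> (P [set w | (g w <= a - e)%R] <= b%:E)%E) ->
  (P [set w | (g w < a)%R] <= b%:E)%E.
Proof.
move=> H.
pose F n := [set w | g w <= a - n.+1%:R^-1].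
have cv : (P \o F) @ \oo --> P (\bigcup_n F n).
  apply: nondecreasing_cvg_mu => //; first by move=> i; exact: mle.
    by apply: bigcup_measurable => i _; exact: mle.
  move=> m n mn; apply/subsetPset => w /=; rewrite /F /= => /le_trans; apply.
  by rewrite lerD2l lerN2 lef_pV2 ?posrE// ler_nat.
have E : \bigcup_n F n = [set w | g w < a].
  apply/seteqP; split => w /=.
    move=> [n _]; rewrite /F /= => /le_lt_trans; apply.
    by rewrite ltrBlDr ltrDl invr_gt0.
  move=> lt; have : 0 < a - g w by rewrite subr_gt0.
  move/arch => [n Hn].
  exists n => //; rewrite /F /= lerBrDl -lerBrDr; exact: ltW.
rewrite E in cv.
apply: (cvge_to_le cv); near=> n => /=.
by apply: H; rewrite invr_gt0.
Unshelve. all: by end_near. Qed.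

Lemma mono z1 z2 : z1 <= z2 ->
  (P [set w | (g w <= z1)%R] <= P [set w | (g w <= z2)%R])%E.
Proof.
move=> h; apply: le_measure; rewrite ?inE; [exact: mle|exact: mle|].
by move=> w /= h1; exact: le_trans h1 h.
Qed.

Definition S gam := [set z | (gam%:E <= P [set w | (g w <= z)%R])%E].

Lemma Q0 gam : 0 < gam -> gam < 1 -> has_inf (S gam).
Proof.
move=> g0 g1; split.
  by have [z hz] := L1 gam g1; exists z; rewrite /S /=; exact: ltW.
have [z hz] := L2 gam g0; exists z => s Ss; rewrite leNgt; apply/negP => sz.
have := le_trans Ss (mono _ _ (ltW sz)); rewrite leNgt => /negP; exact.
Qed.

Lemma Q2 gam z : 0 < gam -> gam < 1 -> z < inf (S gam) ->
  (P [set w | (g w <= z)%R] < gam%:E)%E.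
Proof.
move=> g0 g1 zq; rewrite ltNge; apply/negP => Sz.
have := ge_inf (Q0 _ g0 g1).2 Sz; rewrite leNgt => /negP; exact.
Qed.

Lemma Q1 gam : 0 < gam -> gam < 1 ->
  (gam%:E <= P [set w | (g w <= inf (S gam))%R])%E.
Proof.
move=> g0 g1; apply: L3 => e e0.
have [s Ss ss] := inf_adherent e0 (Q0 _ g0 g1).
exact: le_trans Ss (mono _ _ (ltW ss)).
Qed.

Lemma Q3 gam : 0 < gam -> gam < 1 ->
  (P [set w | (g w < inf (S gam))%R] <= gam%:E)%E.
Proof.
move=> g0 g1; apply: L4 => e e0; apply: ltW; apply: Q2 => //.
by rewrite ltrBlDr ltrDl.
Qed.

Lemma Q4 gam' gam : 0 < gam' -> gam' <= gam -> gam < 1 ->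
  inf (S gam') <= inf (S gam).
Proof.
move=> g0 gg g1.
have g0' : 0 < gam by exact: lt_le_trans gg.
apply: lb_le_inf; first exact: (Q0 _ g0' g1).1.
move=> s Ss; apply: (ge_inf (Q0 _ g0 (le_lt_trans gg g1)).2).
by apply: le_trans Ss; rewrite lee_fin.
Qed.

Lemma Core (b' b z' : R) : 0 < b' -> b' < b -> b < 1 -> z' < inf (S b) ->
  (0 < P ([set w | (z' < g w)%R] `&` [set w | (g w <= inf (S b))%R]
          `&` [set w | (inf (S b') <= g w)%R]))%E.
Proof.
move=> h0 h1 h2 zq.
have hb0 : 0 < b by exact: lt_trans h1.
have hb1 : b' < 1 by exact: lt_trans h2.
set q := inf (S b) in zq *; set q' := inf (S b').
set A := _ `&` _ `&` _.
have mA : measurable A by apply: measurableI; [apply: measurableI|]; 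
  [apply: mgt|apply: mle|apply: mge]; exact: hf.
set C := [set w | g w <= z'] `|` [set w | g w < q'].
have mC : measurable C by apply: measurableU; [exact: mle|exact: mlt].
have BAC : [set w | g w <= q] `<=` A `|` C.
  move=> w /= wq; rewrite /A /C /=.
  have [h|h] := leP (g w) z'; first by right; left.
  have [h'|h'] := ltP (g w) q'; first by right; right.
  by left.
have PB : (b%:E <= P A + P C)%E.
  apply: le_trans (Q1 _ hb0 h2) _.
  apply: le_trans (measureU2 _ mA mC).
  apply: le_measure; rewrite ?inE //; [exact: mle|exact: measurableU].
have PC : (P C < b%:E)%E.
  have [hz|hz] := leP q' z'.
    apply: le_lt_trans (Q2 _ _ hb0 h2 zq).
    apply: le_measure; rewrite ?inE //; [exact: mle|].
    move=> w [] /= h; first by [].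
    exact: ltW (lt_le_trans h hz).
  apply: le_lt_trans (_ : (b'%:E < b%:E)%E); last by rewrite lte_fin.
  apply: le_trans (Q3 _ h0 hb1).
  apply: le_measure; rewrite ?inE //; [exact: mlt|].
  move=> w [] /= h; last by [].
  exact: le_lt_trans h hz.
rewrite lt_neqAle measure_ge0 andbT; apply/eqP => A0.
move: PB; rewrite -A0 add0e => PB.
have := le_lt_trans PB PC; by rewrite ltxx.
Qed.
End S.

Theorem mainTheorem2 (R : realType) (d : measure_display) (T : measurableType d)
  (P : probability T R) (k n : nat) (Y : T -> 'rV[R]_n)
  (f : 'rV[R]_k -> 'rV[R]_n -> R) (X : set 'rV[R]_k)
  (hf : forall x : 'rV[R]_k, measurable_fun setT (fun w => f x (Y w)))
  (beta' beta : R) (h0 : 0 < beta') (h1 : beta' < beta) (h2 : beta < 1) :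
  aggregation_condition P Y f X beta (risk_region_set P Y f X beta') /\
  (forall x, X x -> forall z' : R,
    z' < quantile P (fun w => f x (Y w)) beta ->
    pos_prob P (Y @^-1` ([set y | z' <= f x y <= quantile P (fun w => f x (Y w)) beta]
                          `&` risk_region_set P Y f X beta'))).
Proof.
have qE : forall x gam, quantile P (fun w => f x (Y w)) gam
    = inf (@S _ _ _ P (fun w => f x (Y w)) gam) by [].
have key : forall x, X x -> forall z' : R,
    z' < quantile P (fun w => f x (Y w)) beta ->
    pos_prob P (Y @^-1` ([set y | z' < f x y <= quantile P (fun w => f x (Y w)) beta]
                          `&` risk_region_set P Y f X beta')).
  move=> x Xx z' zq; rewrite qE in zq.
  set g := fun w => f x (Y w).
  exists ([set w | (z' < g w)%R] `&` [set w | (g w <= inf (@S _ _ _ P g beta))%R]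
          `&` [set w | (inf (@S _ _ _ P g beta') <= g w)%R]); split.
  - by apply: measurableI; [apply: measurableI|];
      [apply: mgt|apply: mle|apply: mge]; exact: hf.
  - move=> w [[/= a b] c]; split; first by rewrite /= a.
    by exists x => //; rewrite /risk_region /= qE.
  - by apply: Core => //; exact: hf.
split; first split.
- move=> y [x Xx] /=; rewrite /risk_region /= => hy; exists x => //=.
  apply: le_trans hy; rewrite !qE; apply: Q4 => //; exact: ltW.
- exact: key.
move=> x Xx z' zq; have [A [mA sA pA]] := key x Xx z' zq.
exists A; split => // w /sA [/= /andP[a b] c]; split => //.
by rewrite /= (ltW a).
Qed.
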